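(* Let $f \colon \mathbb{R}^n \to \mathbb{R}$ and $g \colon \mathbb{R}^n \to \mathbb{R}^m$ be continuously differentiable, let $X \subseteq \mathbb{R}^m$ be nonempty and closed, let $\rho>0$, and let $p^\rho(y) = \sum_{i=1}^n p_i^\rho(y_i)$ where each $p_i^\rho$ satisfies (P.1)–(P.3) below. Let $(x^*,y^* )$ be a stationary point of (SPOref) such that SP-GMFCQ holds at $x^*$. Then there exist $\alpha^*>0$ and a neighborhood $U$ of $(x^*,y^* )$ such that, for all $\alpha\ge\alpha^*$, every stationary point of Pen$(\alpha)$ lying in $U$ is a stationary point of (SPOref).
   Context: Conditions on each $p_i^\rho\colon\mathbb{R}\to\mathbb{R}$: (P.1) convex with a unique minimizer $s_i^\rho>0$; (P.2) $p_i^\rho(0)-p_i^\rho(s_i^\rho)=\rho$; (P.3) continuously differentiable. Notation: $I_0(z)=\{i : z_i=0\}$, $|x| = (|x_1|,\dots,|x_n|)^T$, $\circ$ the componentwise product, $e_i$ the $i$-th unit vector, $g'(x)$ the Jacobian of $g$, $N^{\lim}_X$ the limiting (Mordukhovich) normal cone to $X$. (SPOref) is $\min_{x,y} f(x)+p^\rho(y)$ s.t. $g(x)\in X$, $x\circ y=0$, $y\ge0$. A feasible point $(x,y)$ of (SPOref) is stationary if there exist $\lambda\in N^{\lim}_X(g(x))$, reals $\gamma_i^x$ ($i\in I_0(x)$), $\gamma_i^y$ and $\nu_i\ge 0$ ($i\in I_0(y)$) with $0 = \nabla f(x) + g'(x)^T\lambda + \sum_{i\in I_0(x)} \gamma_i^x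 y_i e_i$ and $0 = \nabla p^\rho(y) + \sum_{i\in I_0(y)}(\gamma_i^y x_i - \nu_i) e_i$. Pen$(\alpha)$ is $\min_{x,y} f(x)+p^\rho(y)+\alpha|x|^Ty$ s.t. $g(x)\in X$, $y\ge 0$; a point $(x,y)$ is stationary for Pen$(\alpha)$ if $g(x)\in X$, $y\ge0$, and there exist $\lambda\in N^{\lim}_X(g(x))$ and $\gamma_i\ge 0$ ($i\in I_0(y)$) such that $0\in \nabla f(x) + \alpha\, y\circ\partial(|x|) + g'(x)^T\lambda$ and $0 = \nabla p^\rho(y) + \alpha|x| - \sum_{i\in I_0(y)}\gamma_i e_i$, where $y\circ\partial(|x|) = \{y\circ s : s_i = \operatorname{sign}(x_i) \text{ if } x_i\ne0,\ s_i\in[-1,1] \text{ if } x_i=0\}$. SP-GMFCQ holds at $x^*$ (with $g(x^* )\in X$) if there is no nonzero pair $(\lambda^a,\lambda^b)\in\mathbb{R}^{|I_0(x^* )|}\times N^{\lim}_X(g(x^* ))$ with $\sum_{i\in I_0(x^* )}\lambda^a_i e_i + g'(x^* )^T\lambda^b = 0$. *)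

(* Defs.v *)
From HB Require Import structures.
From mathcomp Require Import all_boot all_order all_algebra.
From mathcomp Require Import all_classical all_reals all_analysis.
Set Implicit Arguments. Unset Strict Implicit. Unset Printing Implicit Defensive.
Import Order.TTheory GRing.Theory Num.Theory.
Import numFieldNormedType.Exports.
Local Open Scope classical_set_scope.
Local Open Scope ring_scope.

Section SPO.
Variable R : realType.

Definition unitv (n : nat) (i : 'I_n) : 'rV[R]_n := delta_mx ord0 i.

Definition dotv (n : nat) (u v : 'rV[R]_n) : R := \sum_(i < n) u ord0 i * v ord0 i.
Definition enorm (n : nat) (u : 'rV[R]_n) : R := Num.sqrt (dotv u u).

Definition frechet_normal (m : nat) (X : set 'rV[R]_m) (z v : 'rV[R]_m) : Prop :=
  X z /\
  forall eps : R, 0 < eps -> exists2 delta : R, 0 < delta &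
    forall z', X z' -> enorm (z' - z) < delta ->
      dotv v (z' - z) <= eps * enorm (z' - z).

Definition limiting_normal (m : nat) (X : set 'rV[R]_m) (z v : 'rV[R]_m) : Prop :=
  X z /\
  exists (zk vk : nat -> 'rV[R]_m),
    (forall k, frechet_normal X (zk k) (vk k)) /\
    zk @ \oo --> z /\ vk @ \oo --> v.

Definition grad (n : nat) (f : 'rV[R]_n -> R) (x : 'rV[R]_n) : 'rV[R]_n :=
  \row_j ('d f x (unitv j)).
Definition jac (n m : nat) (g : 'rV[R]_n -> 'rV[R]_m) (x : 'rV[R]_n) : 'M[R]_(m, n) :=
  \matrix_(i, j) ('d g x (unitv j)) ord0 i.

Definition C1 (n k : nat) (h : 'rV[R]_n -> 'rV[R]_k) : Prop :=
  (forall x, differentiable h x) /\ (forall v, continuous (fun x => 'd h x v)).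
Definition C1s (n : nat) (h : 'rV[R]_n -> R) : Prop :=
  (forall x, differentiable h x) /\ (forall v, continuous (fun x => 'd h x v)).

Definition convex_fun (q : R -> R) : Prop :=
  forall a b t : R, 0 <= t <= 1 -> q (t * a + (1 - t) * b) <= t * q a + (1 - t) * q b.
Definition P_conditions (rho : R) (q : R -> R) (s : R) : Prop :=
  [/\ convex_fun q /\ 0 < s /\ (forall t, q s <= q t) /\
                (forall t, (forall u, q t <= q u) -> t = s),
      q 0 - q s = rho
    & (forall t, derivable q t 1) /\ continuous (derive1 q)].

Definition psum (n : nat) (p : 'I_n -> R -> R) (y : 'rV[R]_n) : R :=
  \sum_(i < n) p i (y ord0 i).
Definition grad_p (n : nat) (p : 'I_n -> R -> R) (y : 'rV[R]_n) : 'rV[R]_n :=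
  \row_i (derive1 (p i) (y ord0 i)).

Definition absv (n : nat) (x : 'rV[R]_n) : 'rV[R]_n := \row_i `|x ord0 i|.

(* stationarity for (SPOref); gradient terms written as row vectors,
   so g'(x)^T lambda appears as lambda *m g'(x) *)
Definition SPOref_stationary (n m : nat) (f : 'rV[R]_n -> R)
    (g : 'rV[R]_n -> 'rV[R]_m) (X : set 'rV[R]_m) (p : 'I_n -> R -> R)
    (x y : 'rV[R]_n) : Prop :=
  [/\ X (g x), (forall i, x ord0 i * y ord0 i = 0), (forall i, 0 <= y ord0 i) &
   exists (lam : 'rV[R]_m) (gx gy nu : 'I_n -> R),
     [/\ limiting_normal X (g x) lam,
         (forall i, y ord0 i = 0 -> 0 <= nu i),
         0 = grad f x + lam *m jac g x
               + \sum_(i < n | x ord0 i == 0) (gx i * y ord0 i) *: unitv i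
       & 0 = grad_p p y
               + \sum_(i < n | y ord0 i == 0) (gy i * x ord0 i - nu i) *: unitv i]].

Definition Pen_stationary (n m : nat) (f : 'rV[R]_n -> R)
    (g : 'rV[R]_n -> 'rV[R]_m) (X : set 'rV[R]_m) (p : 'I_n -> R -> R)
    (alpha : R) (x y : 'rV[R]_n) : Prop :=
  [/\ X (g x), (forall i, 0 <= y ord0 i) &
   exists (lam : 'rV[R]_m) (gam : 'I_n -> R) (sg : 'rV[R]_n),
     [/\ limiting_normal X (g x) lam,
         (forall i, y ord0 i = 0 -> 0 <= gam i),
         (forall i, (x ord0 i != 0 -> sg ord0 i = Num.sg (x ord0 i)) /\
                    (x ord0 i = 0 -> -1 <= sg ord0 i <= 1)),
         0 = grad f x + alpha *: (\row_i (y ord0 i * sg ord0 i)) + lam *m jac g x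
       & 0 = grad_p p y + alpha *: absv x
               - \sum_(i < n | y ord0 i == 0) gam i *: unitv i]].

Definition SP_GMFCQ (n m : nat) (g : 'rV[R]_n -> 'rV[R]_m) (X : set 'rV[R]_m)
    (xs : 'rV[R]_n) : Prop :=
  X (g xs) /\
  forall (la : 'I_n -> R) (lb : 'rV[R]_m),
    limiting_normal X (g xs) lb ->
    \sum_(i < n | xs ord0 i == 0) la i *: unitv i + lb *m jac g xs = 0 ->
    (forall i, xs ord0 i = 0 -> la i = 0) /\ lb = 0.

End SPO.

(* Main.v *)
Require Import Defs.
From HB Require Import structures.
From mathcomp Require Import all_boot all_order all_algebra.
From mathcomp Require Import all_classical all_reals all_analysis.
From mathcomp Require Import ring lra.
Import Order.TTheory GRing.Theory Num.Theory.
Import numFieldNormedType.Exports.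
Local Open Scope classical_set_scope.
Local Open Scope ring_scope.
Section T1.
Local Set Implicit Arguments.
Variable R : realType.

Lemma coord_le_norm k (v : 'rV[R]_k) j : `|v ord0 j| <= `|v|.
Proof.
rewrite [leRHS]/Num.Def.normr /= mx_normrE; apply/bigmax_geP; right; exists (ord0, j) => //=.
Qed.

Lemma norm_le_coord k (v : 'rV[R]_k) B : 0 <= B -> (forall j, `|v ord0 j| <= B) -> `|v| <= B.
Proof.
move=> B0 H; rewrite [leLHS]/Num.Def.normr /= mx_normrE; apply: bigmax_le => // -[i j] _ /=.
by rewrite (ord1 i).
Qed.

Lemma sum_unitv_coord k (P : pred 'I_k) (a : 'I_k -> R) j :
  (\sum_(i | P i) a i *: unitv R i) ord0 j = if P j then a j else 0.
Proof.
rewrite summxE big_mkcond (bigD1 j) //= big1 ?addr0.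
  by rewrite /unitv !mxE !eqxx /= mulr1; case: (P j).
move=> i /negbTE ij; case: (P i) => //; rewrite /unitv !mxE eqxx /=.
by rewrite eq_sym ij mulr0.
Qed.

Lemma row_eq_sum k (v : 'rV[R]_k) (P : pred 'I_k) :
  (forall i, ~~ P i -> v ord0 i = 0) -> \sum_(i | P i) v ord0 i *: unitv R i = v.
Proof.
move=> H; apply/rowP => j; rewrite sum_unitv_coord.
by case: (boolP (P j)) => // /H ->.
Qed.

End T1.
Section T2.
Variable R : realType.

Lemma slope_bound (q : R -> R) rho s h : convex_fun q -> 0 < s -> q 0 - q s = rho ->
  h != 0 -> h <= s -> h^-1 * (q h - q 0) <= - rho / s.
Proof.
move=> cq s0 qr h0 hs.
have [hn|hp] := ltP h 0.
  have sh : 0 < s - h by lra.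
  have t01 : 0 <= s / (s - h) <= 1.
    apply/andP; split; first by apply: divr_ge0; lra.
    by rewrite ler_pdivrMr // mul1r; lra.
  have := cq h s _ t01.
  have -> : s / (s - h) * h + (1 - s / (s - h)) * s = 0.
    by field; rewrite subr_eq0 gt_eqF //; lra.
  move=> H.
  have H2 : (s - h) * q 0 <= s * q h - h * q s.
    have : (s - h) * q 0 <= (s - h) * (s / (s - h) * q h + (1 - s / (s - h)) * q s).
      by rewrite ler_pM2l.
    suff -> : (s - h) * (s / (s - h) * q h + (1 - s / (s - h)) * q s) = s * q h - h * q s by [].
    by field; rewrite subr_eq0 gt_eqF //; lra.
  have -> : - rho / s = h^-1 * (h * (-rho / s)) by field; rewrite h0 gt_eqF.
  rewrite ler_wnM2l //; first by rewrite invr_le0 ltW.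
  rewrite -(ler_pM2l s0).
  have -> : s * (h * (- rho / s)) = - h * rho by field; rewrite gt_eqF.
  rewrite -qr; nra.
have hp' : 0 < h by rewrite lt_def h0.
have t01 : 0 <= h / s <= 1.
  apply/andP; split; first by apply: divr_ge0; lra.
  by rewrite ler_pdivrMr // mul1r.
have := cq s 0 _ t01.
rewrite mulr0 addr0 mulfVK ?gt_eqF // => H.
rewrite -ler_pdivlMl ?invr_gt0 // invrK mulrA.
have -> : h * - rho / s = h / s * (q s - q 0) by rewrite -qr; field; rewrite gt_eqF.
by rewrite mulrBr; move: H; lra.
Qed.

Lemma deriv0_neg (q : R -> R) rho s : P_conditions rho q s -> 0 < rho -> derive1 q 0 < 0.
Proof.
move=> [[cq [s0 _]] qr [dq _]] rho0.
apply: (le_lt_trans (y := - rho / s)); last first.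
  by rewrite mulNr oppr_lt0 divr_gt0.
have := dq 0; rewrite /derivable => /cvg_ex [l Hl].
have Hd : derive1 q 0 = l.
  by rewrite derive1E; apply: cvg_lim.
rewrite Hd; apply: (closed_cvg _ (@closed_le _ (- rho / s)) _ _ Hl).
rewrite /within /=; apply/nbhs_ballP; exists s => //= h.
rewrite /ball /= sub0r normrN => hs hn.
rewrite addr0.
have -> : h *: (1 : R) = h by rewrite /GRing.scale /= mulr1.
apply: (slope_bound _ _ _ _ cq s0 qr hn).
by move: hs; rewrite ltr_norml => /andP [_ /ltW].
Qed.
End T2.
Section T3.
Local Set Implicit Arguments.
Variable R : realType.

Lemma natinv_small (e : R) : 0 < e -> \forall n \near \oo, n.+1%:R^-1 < e.
Proof. by move=> e0; have := near_infty_natSinv_lt (PosNum e0). Qed.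

Lemma cvg_inv_bound (V : normedModType R) (u : nat -> V) l :
  (forall k, `|u k - l| < k.+1%:R^-1) -> u @ \oo --> l.
Proof.
move=> H; apply/cvgrPdist_lt => e e0.
near=> k; rewrite distrC; apply: lt_trans (H k) _.
by near: k; exact: natinv_small.
Unshelve. all: by end_near. Qed.

Lemma dotvZ k (c : R) (u v : 'rV[R]_k) : dotv (c *: u) v = c * dotv u v.
Proof.
rewrite /dotv mulr_sumr; apply: eq_bigr => i _; by rewrite mxE mulrA.
Qed.

Lemma frechetZ m (X : set 'rV[R]_m) z v c : 0 < c ->
  frechet_normal X z v -> frechet_normal X z (c *: v).
Proof.
move=> c0 [Xz H]; split => // eps e0.
have [d d0 Hd] := H (eps / c) (divr_gt0 e0 c0).
exists d => // z' Xz' hz'; rewrite dotvZ.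
have := Hd z' Xz' hz'.
rewrite -(ler_pM2l c0) => /le_trans; apply.
by rewrite mulrA mulrCA divff ?gt_eqF // mulr1.
Qed.

Lemma limLB m (X : set 'rV[R]_m) z v : limiting_normal X z v ->
  forall e, 0 < e -> exists z' v', [/\ frechet_normal X z' v', `|z' - z| < e & `|v' - v| < e].
Proof.
move=> [Xz [zk [vk [Hf [Hz Hv]]]]] e e0.
move/cvgrPdist_lt: Hz => /(_ e e0) Hz'.
move/cvgrPdist_lt: Hv => /(_ e e0) Hv'.
have := filterI Hz' Hv'.
case=> N _ HN; have [h1 h2] := HN N (leqnn N).
by exists (zk N), (vk N); split => //; rewrite distrC.
Qed.

Lemma limLA m (X : set 'rV[R]_m) z v : closed X ->
  (forall e, 0 < e -> exists z' v', [/\ frechet_normal X z' v', `|z' - z| < e & `|v' - v| < e]) ->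
  limiting_normal X z v.
Proof.
move=> cX H; split.
  apply: cX => B /nbhs_ballP [e e0 He].
  have [z' [v' [[Xz' _] h1 _]]] := H e e0.
  exists z'; split => //; apply: He.
  by rewrite -ball_normE /= distrC.
have H' : forall k : nat, exists zv : 'rV[R]_m * 'rV[R]_m,
   [/\ frechet_normal X zv.1 zv.2, `|zv.1 - z| < k.+1%:R^-1 & `|zv.2 - v| < k.+1%:R^-1].
  move=> k; have [z' [v' Hzv]] := H k.+1%:R^-1 ltac:(by rewrite invr_gt0).
  by exists (z', v').
have [w Hw] := choice H'.
exists (fun k => (w k).1), (fun k => (w k).2); split; [|split].
- by move=> k; have [] := Hw k.
- apply: (@cvg_inv_bound _ (fun k => (w k).1) z) => k; by have [] := Hw k.
- by apply: (@cvg_inv_bound _ (fun k => (w k).2) v) => k; have [] := Hw k.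
Qed.

Lemma limLS m (X : set 'rV[R]_m) z v c : closed X -> 0 < c ->
  limiting_normal X z v -> limiting_normal X z (c *: v).
Proof.
move=> cX c0 Hl; apply: limLA => // e e0.
have ec : 0 < Num.min e (e / c) by rewrite lt_min e0 divr_gt0.
have [z' [v' [Hf h1 h2]]] := limLB Hl _ ec.
exists z', (c *: v'); split.
- exact: frechetZ.
- by apply: lt_le_trans h1 _; rewrite ge_min lexx.
- rewrite -scalerBr normrZ gtr0_norm //.
  rewrite -ltr_pdivlMl // mulrC; apply: lt_le_trans h2 _; rewrite ge_min lexx orbT //.
Qed.
End T3.
Section T4.
Local Set Implicit Arguments.
Variable R : realType.

Lemma cluster0 (T : topologicalType) (w : nat -> T) p0 (h : T -> R) :
  cluster (w @ \oo) p0 -> {for p0, continuous h} ->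
  (fun k => h (w k)) @ \oo --> 0 -> h p0 = 0.
Proof.
move=> Hc Hh H0; apply: contrapT => /eqP hn.
have e0 : 0 < `|h p0| / 2 by rewrite divr_gt0 ?normr_gt0.
move/cvgrPdist_lt: Hh => /(_ _ e0) HA.
move/cvgrPdist_lt: H0 => /(_ _ e0) HB.
have [p [Bp Ap]] := Hc [set p | `|0 - h p| < `|h p0| / 2] _ HB HA.
move: Bp Ap => /=; rewrite sub0r normrN => Bp Ap.
have : `|h p0| < `|h p0| / 2 + `|h p0| / 2.
  apply: (le_lt_trans (y := `|h p0 - h p| + `|h p|)).
    by rewrite -[X in `|X|](subrK (h p)) ler_normD.
  by apply: ltrD.
by rewrite -splitr ltxx.
Qed.

Lemma ball_compact k (x0 : 'rV[R]_k) (r : R) : compact (closed_ball_ Num.Def.normr x0 r).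
Proof.
apply: bounded_closed_compact; last exact: closed_closed_ball_.
exists (`|x0| + r); split; first by rewrite num_real.
move=> M hM y /= hy.
apply: le_trans (ltW hM).
have -> : y = x0 + (y - x0) by rewrite addrC subrK.
apply: (le_trans (ler_normD _ _)); rewrite lerD2l.
by rewrite -normrN opprB.
Qed.

Variables (n m : nat).
Definition PT := ('rV[R]_n * ('rV[R]_n * 'rV[R]_m))%type.

Lemma cont_x (p0 : PT) i : {for p0, continuous (fun p : PT => p.1 ord0 i)}.
Proof.
apply: (continuous_comp (f := fun p : PT => p.1) (g := fun x : 'rV[R]_n => x ord0 i)).
  exact: cvg_fst.
exact: coord_continuous.
Qed.


Lemma cont_la (p0 : PT) i : {for p0, continuous (fun p : PT => p.2.1 ord0 i)}.
Proof.
apply: (continuous_comp (f := fun p : PT => p.2) (g := fun x => x.1 ord0 i)).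
  exact: cvg_snd.
apply: (continuous_comp (f := fun p => p.1) (g := fun x : 'rV[R]_n => x ord0 i)).
  exact: cvg_fst.
exact: coord_continuous.
Qed.

Lemma cont_lb (p0 : PT) i : {for p0, continuous (fun p : PT => p.2.2 ord0 i)}.
Proof.
apply: (continuous_comp (f := fun p : PT => p.2) (g := fun x => x.2 ord0 i)).
  exact: cvg_snd.
apply: (continuous_comp (f := fun p => p.2) (g := fun x : 'rV[R]_m => x ord0 i)).
  exact: cvg_snd.
exact: coord_continuous.
Qed.

Lemma cont_norms (p0 : PT) : {for p0, continuous (fun p : PT => `|p.2.1| + `|p.2.2| - 1)}.
Proof.
apply: cvgB; last exact: cvg_cst.
apply: cvgD.
  apply: (continuous_comp (f := fun p : PT => p.2) (g := fun x => `|x.1|)).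
    exact: cvg_snd.
  apply: (continuous_comp (f := fun p => p.1) (g := fun x : 'rV[R]_n => `|x|)).
    exact: cvg_fst.
  exact: norm_continuous.
apply: (continuous_comp (f := fun p : PT => p.2) (g := fun x => `|x.2|)).
  exact: cvg_snd.
apply: (continuous_comp (f := fun p => p.2) (g := fun x : 'rV[R]_m => `|x|)).
  exact: cvg_snd.
exact: norm_continuous.
Qed.

Lemma cont_jac (g : 'rV[R]_n -> 'rV[R]_m) (p0 : PT) i j : C1 g ->
  {for p0, continuous (fun p : PT => ('d g (p.1) (unitv R j)) ord0 i)}.
Proof.
move=> [_ Hg].
apply: (continuous_comp (f := fun p : PT => p.1) (g := fun x => ('d g x (unitv R j)) ord0 i)).
  exact: cvg_fst.
apply: (continuous_comp (f := fun x => 'd g x (unitv R j)) (g := fun x : 'rV[R]_m => x ord0 i)).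
  exact: Hg.
exact: coord_continuous.
Qed.

Lemma phi_coord (g : 'rV[R]_n -> 'rV[R]_m) (p : PT) j :
  (p.2.1 + p.2.2 *m jac g p.1) ord0 j =
  p.2.1 ord0 j + \sum_i p.2.2 ord0 i * ('d g (p.1) (unitv R j)) ord0 i.
Proof. by rewrite !mxE; congr (_ + _); apply: eq_bigr => i _; rewrite !mxE. Qed.

Lemma cont_phi (g : 'rV[R]_n -> 'rV[R]_m) (p0 : PT) j : C1 g ->
  {for p0, continuous (fun p : PT => (p.2.1 + p.2.2 *m jac g p.1) ord0 j)}.
Proof.
move=> Cg.
have -> : (fun p : PT => (p.2.1 + p.2.2 *m jac g p.1) ord0 j) =
  (fun p : PT => p.2.1 ord0 j + \sum_i p.2.2 ord0 i * ('d g (p.1) (unitv R j)) ord0 i).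
  by apply: funext => p; rewrite phi_coord.
apply: cvgD; first exact: cont_la.
apply: cvg_big; first exact: add_continuous.
move=> i _; apply: cvgM; first exact: cont_lb.
exact: cont_jac.
Qed.

End T4.

Section T6.
Local Set Implicit Arguments.
Variable R : realType.
Lemma rcD k (u v : 'rV[R]_k) j : (u + v) ord0 j = u ord0 j + v ord0 j.
Proof. by rewrite mxE. Qed.
Lemma rcB k (u v : 'rV[R]_k) j : (u - v) ord0 j = u ord0 j - v ord0 j.
Proof. by rewrite !mxE. Qed.
Lemma rcZ k (a : R) (u : 'rV[R]_k) j : (a *: u) ord0 j = a * u ord0 j.
Proof. by rewrite mxE. Qed.
Lemma rc0 k j : (0 : 'rV[R]_k) ord0 j = 0.
Proof. by rewrite mxE. Qed.
End T6.
Section T5.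
Local Set Implicit Arguments.
Variable R : realType.

Lemma Qlemma n m (g : 'rV[R]_n -> 'rV[R]_m) (X : set 'rV[R]_m) xs :
  C1 g -> closed X -> SP_GMFCQ g X xs ->
  exists2 d, 0 < d & exists2 c, 0 < c & forall x (la : 'rV[R]_n) (lb : 'rV[R]_m), `|x - xs| < d ->
    limiting_normal X (g x) lb -> (forall i, xs ord0 i != 0 -> la ord0 i = 0) ->
    c * (`|la| + `|lb|) <= `|la + lb *m jac g x|.
Proof.
move=> Cg cX [_ GM]; apply: contrapT => HQ.
have H' : forall k : nat, exists w : PT R n m,
  [/\ `|w.1 - xs| < k.+1%:R^-1, limiting_normal X (g w.1) w.2.2,
      (forall i, xs ord0 i != 0 -> w.2.1 ord0 i = 0),
      `|w.2.1| + `|w.2.2| = 1 & `|w.2.1 + w.2.2 *m jac g w.1| < k.+1%:R^-1].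
  move=> k; apply: contrapT => Hk; apply: HQ.
  have k0 : 0 < k.+1%:R^-1 :> R by rewrite invr_gt0.
  exists k.+1%:R^-1 => //; exists k.+1%:R^-1 => // x la lb hx hl hs.
  rewrite leNgt; apply/negP => hlt; apply: Hk.
  set t := `|la| + `|lb|.
  have t0 : 0 < t.
    have : 0 < k.+1%:R^-1 * t by apply: le_lt_trans hlt.
    by rewrite pmulr_rgt0.
  exists (x, (t^-1 *: la, t^-1 *: lb)); split => /=.
  - exact: hx.
  - by apply: limLS => //; rewrite invr_gt0.
  - by move=> i /hs hi; rewrite mxE hi mulr0.
  - by rewrite !normrZ gtr0_norm ?invr_gt0 // -mulrDr mulVf // gt_eqF.
  - rewrite -scalemxAl -scalerDr normrZ gtr0_norm ?invr_gt0 //.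
    rewrite -ltr_pdivlMl ?invr_gt0 // invrK mulrC; exact: hlt.
have [W HW] := choice H'.
pose K := closed_ball_ Num.Def.normr xs 1 `*`
  (closed_ball_ Num.Def.normr (0 : 'rV[R]_n) 1 `*` closed_ball_ Num.Def.normr (0 : 'rV[R]_m) 1).
have cK : compact K by apply: compact_setX; [|apply: compact_setX]; exact: ball_compact.
have FK : (W @ \oo) K.
  exists 0%N => // k _ /=; have [h1 _ _ h4 _] := HW k.
  split => /=; first by rewrite /closed_ball_ /= distrC ltW // (lt_le_trans h1) // invf_le1 // ler1n.
  split => /=; rewrite /closed_ball_ /= sub0r normrN -h4.
    by rewrite lerDl.
  by rewrite lerDr.
have [[x0 [la0 lb0]] [Kp0 Cp0]] := cK _ _ FK.
have HWx : (fun k => (W k).1) @ \oo --> xs.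
  by apply: cvg_inv_bound => k; have [] := HW k.
have cvg0 : forall u : nat -> R, (forall k, `|u k| < k.+1%:R^-1) -> u @ \oo --> 0.
  move=> u Hu; apply: cvg_inv_bound => k; by rewrite subr0.
have ex0 : x0 = xs.
  apply/rowP => i; apply/eqP; rewrite -subr_eq0; apply/eqP.
  pose h := fun p : PT R n m => p.1 ord0 i - xs ord0 i.
  apply: (cluster0 (h := h) Cp0).
    by apply: cvgB; [exact: cont_x | exact: cvg_cst].
  apply: cvg0 => k; rewrite /h; have [h1 _ _ _ _] := HW k.
  by apply: le_lt_trans h1; have := @coord_le_norm R _ ((W k).1 - xs) i; rewrite !mxE.
subst x0.
have hnorm : `|la0| + `|lb0| = 1.
  apply/eqP; rewrite -subr_eq0; apply/eqP.
  pose h := fun p : PT R n m => `|p.2.1| + `|p.2.2| - 1.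
  apply: (cluster0 (h := h) Cp0); first exact: cont_norms.
  have -> : (fun k => h (W k)) = fun _ => 0.
    by apply: funext => k; rewrite /h; have [_ _ _ -> _] := HW k; rewrite subrr.
  exact: cvg_cst.
have hsupp : forall i, xs ord0 i != 0 -> la0 ord0 i = 0.
  move=> i hi.
  pose h := fun p : PT R n m => p.2.1 ord0 i.
  apply: (cluster0 (h := h) Cp0); first exact: cont_la.
  have -> : (fun k => h (W k)) = fun _ => 0.
    by apply: funext => k; rewrite /h; have [_ _ -> // _ _] := HW k.
  exact: cvg_cst.
have hphi : la0 + lb0 *m jac g xs = 0.
  apply/rowP => j; rewrite [RHS]mxE.
  pose h := fun p : PT R n m => (p.2.1 + p.2.2 *m jac g p.1) ord0 j.
  apply: (cluster0 (h := h) Cp0); first exact: cont_phi.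
  apply: cvg0 => k; rewrite /h; have [_ _ _ _ h5] := HW k.
  by apply: le_lt_trans h5; apply: coord_le_norm.
have hlim : limiting_normal X (g xs) lb0.
  apply: limLA => // e e0.
  have e20 : 0 < e / 2 by rewrite divr_gt0.
  have Hg : g @ xs --> g xs := differentiable_continuous (Cg.1 xs).
  have Hgk : (fun k => g (W k).1) @ \oo --> g xs := cvg_comp _ _ HWx Hg.
  move/cvgrPdist_lt: Hgk => /(_ _ e20) Hgk.
  have HB : (W @ \oo) [set p : PT R n m | `|g xs - g p.1| < e / 2 /\ limiting_normal X (g p.1) p.2.2].
    case: Hgk => N _ HN; exists N => // k /HN hk /=; split => //.
    by have [] := HW k.
  have HA := nbhsx_ballx (xs, (la0, lb0)) _ e20.
  have [p [[hp1 hp2] [_ [_ hb]]]] := Cp0 _ _ HB HA.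
  move: hb; rewrite -ball_normE /= => hb.
  have [z' [v' [Hf h1 h2]]] := limLB hp2 _ e20.
  exists z', v'; split => //.
    have -> : z' - g xs = (z' - g p.1) + (g p.1 - g xs) by rewrite addrA subrK.
    rewrite (splitr e); apply: le_lt_trans (ler_normD _ _) _; apply: ltrD => //.
    by rewrite distrC.
  have -> : v' - lb0 = (v' - p.2.2) + (p.2.2 - lb0) by rewrite addrA subrK.
  rewrite (splitr e); apply: le_lt_trans (ler_normD _ _) _; apply: ltrD => //.
  by rewrite distrC.
have hsum : \sum_(i < n | xs ord0 i == 0) (fun i => la0 ord0 i) i *: unitv R i + lb0 *m jac g xs = 0.
  rewrite row_eq_sum //; move=> i; exact: hsupp.
have [hz hlb] := GM _ _ hlim hsum.
have hla : la0 = 0.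
  apply/rowP => i; rewrite mxE; case: (eqVneq (xs ord0 i) 0) => hi.
    exact: hz.
  exact: hsupp.
by move: hnorm; rewrite hla hlb !normr0 addr0 => /eqP; rewrite eq_sym oner_eq0.
Qed.
End T5.

Theorem mainTheorem4 (R : realType) (n m : nat)
    (f : 'rV[R]_n -> R) (g : 'rV[R]_n -> 'rV[R]_m) (X : set 'rV[R]_m)
    (rho : R) (p : 'I_n -> R -> R) (s : 'I_n -> R) :
  C1s f -> C1 g -> X !=set0 -> closed X -> 0 < rho ->
  (forall i, P_conditions rho (p i) (s i)) ->
  forall xs ys : 'rV[R]_n,
  SPOref_stationary f g X p xs ys ->
  SP_GMFCQ g X xs ->
  exists2 alphas : R, 0 < alphas &
  exists2 U : set ('rV[R]_n * 'rV[R]_n), nbhs (xs, ys) U &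
    forall alpha : R, alphas <= alpha ->
    forall x y : 'rV[R]_n, U (x, y) ->
      Pen_stationary f g X p alpha x y -> SPOref_stationary f g X p x y.
Proof.
move=> Cf Cg _ cX rho0 HP xs ys [Xgxs hxy hys [lam0 [gx0 [gy0 [nu0 [_ hnu0 _ heq2]]]]]] HGM.
have ys_pos : forall i, xs ord0 i = 0 -> 0 < ys ord0 i.
  move=> i hx; have := hys i; rewrite le_eqVlt => /orP [/eqP h0 | //].
  have := congr1 (fun v : 'rV[R]_n => v ord0 i) heq2.
  rewrite rc0 rcD sum_unitv_coord /grad_p mxE -h0 eqxx hx mulr0 sub0r.
  move=> E; have := @deriv0_neg R _ _ _ (HP i) rho0.
  have := hnu0 i (esym h0); lra.
have [d d0 [c c0 HQ]] := Qlemma Cg cX HGM.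
pose B := `|grad f xs| + 1.
pose pd i := derive1 (p i) 0.
pose T i := if xs ord0 i != 0 then 2 * (1 + `|pd i|) / `|xs ord0 i| else 2 * B / (c * ys ord0 i).
have T0 : forall i, 0 <= T i.
  move=> i; rewrite /T; case: ifP => hi.
    by apply: divr_ge0 => //; apply: mulr_ge0 => //; apply: addr_ge0.
  apply: divr_ge0; first by apply: mulr_ge0 => //; apply: addr_ge0.
  by apply: mulr_ge0; [apply: ltW | apply: ltW; apply: ys_pos; apply/eqP; move/negbFE: hi].
pose alphas := 1 + \sum_i T i.
have Tlt : forall i, T i < alphas.
  move=> i; rewrite /alphas (bigD1 i) //= addrCA ltrDl.
  by apply: ltr_pwDl => //; apply: sumr_ge0 => j _; exact: T0.
exists alphas.
  by apply: ltr_pwDl => //; apply: sumr_ge0 => j _; exact: T0.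
pose PA := [set x : 'rV[R]_n | `|x - xs| < d /\
   (forall j, `|grad f xs ord0 j - grad f x ord0 j| < 1) /\
   (forall i, xs ord0 i != 0 -> `|xs ord0 i - x ord0 i| < `|xs ord0 i| / 2)].
pose PB := [set y : 'rV[R]_n |
   (forall i, xs ord0 i != 0 -> `|derive1 (p i) (ys ord0 i) - derive1 (p i) (y ord0 i)| < 1) /\
   (forall i, xs ord0 i == 0 -> `|ys ord0 i - y ord0 i| < ys ord0 i / 2)].
have NA : nbhs xs PA.
  have N1 : \forall x \near xs, `|x - xs| < d.
    by apply: filterS (nbhsx_ballx xs _ d0) => x; rewrite -ball_normE /= distrC.
  have N2 : \forall x \near xs, forall j, `|grad f xs ord0 j - grad f x ord0 j| < 1.
    apply: (@filter_forall _ _ (fun j x => `|grad f xs ord0 j - grad f x ord0 j| < 1) (nbhs xs) _) => j.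
    have Hc : (fun x => grad f x ord0 j) @ xs --> grad f xs ord0 j.
      have -> : (fun x => grad f x ord0 j) = (fun x => 'd f x (unitv R j)).
        by apply: funext => x; rewrite mxE.
      rewrite mxE; exact: (Cf.2 (unitv R j) xs).
    by move/cvgrPdist_lt: Hc => /(_ 1 ltr01).
  have N3 : nbhs xs [set x : 'rV[R]_n | forall i, xs ord0 i != 0 -> `|xs ord0 i - x ord0 i| < `|xs ord0 i| / 2].
    apply: (@filter_forall _ _ (fun i x => xs ord0 i != 0 -> `|xs ord0 i - x ord0 i| < `|xs ord0 i| / 2) (nbhs xs) _) => i.
    case: (eqVneq (xs ord0 i) 0) => hi; first by apply: nearW.
    have Hc : (fun x : 'rV[R]_n => x ord0 i) @ xs --> xs ord0 i by exact: coord_continuous.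
    have e0 : 0 < `|xs ord0 i| / 2 by rewrite divr_gt0 // normr_gt0.
    by move/cvgrPdist_lt: Hc => /(_ _ e0); apply: filterS => x.
  near=> x; split; [|split].
  - by near: x; exact: N1.
  - by near: x; exact: N2.
  - by near: x; exact: N3.
have NB : nbhs ys PB.
  have N1 : nbhs ys [set y : 'rV[R]_n | forall i, xs ord0 i != 0 -> `|derive1 (p i) (ys ord0 i) - derive1 (p i) (y ord0 i)| < 1].
    apply: (@filter_forall _ _ (fun i y => xs ord0 i != 0 -> `|derive1 (p i) (ys ord0 i) - derive1 (p i) (y ord0 i)| < 1) (nbhs ys) _) => i.
    have Hc : (fun y : 'rV[R]_n => derive1 (p i) (y ord0 i)) @ ys --> derive1 (p i) (ys ord0 i).
      apply: (continuous_comp (f := fun y : 'rV[R]_n => y ord0 i) (g := derive1 (p i))).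
        exact: coord_continuous.
      by have [_ _ [_ Hc]] := HP i; exact: Hc.
    by move/cvgrPdist_lt: Hc => /(_ 1 ltr01); apply: filterS => y.
  have N2 : nbhs ys [set y : 'rV[R]_n | forall i, xs ord0 i == 0 -> `|ys ord0 i - y ord0 i| < ys ord0 i / 2].
    apply: (@filter_forall _ _ (fun i y => xs ord0 i == 0 -> `|ys ord0 i - y ord0 i| < ys ord0 i / 2) (nbhs ys) _) => i.
    case: (eqVneq (xs ord0 i) 0) => hi; last by apply: nearW.
    have Hc : (fun y : 'rV[R]_n => y ord0 i) @ ys --> ys ord0 i by exact: coord_continuous.
    have e0 : 0 < ys ord0 i / 2 by rewrite divr_gt0 // ys_pos.
    by move/cvgrPdist_lt: Hc => /(_ _ e0); apply: filterS => y.
  near=> y; split.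
  - by near: y; exact: N1.
  - by near: y; exact: N2.
exists [set z | PA z.1 /\ PB z.2].
  by exists (PA, PB) => //= -[x y] /= [].
move=> alpha halpha x y /= [[hd [hgf hxi]] [hpd hyi]].
move=> [Xgx hy [lam [gam [sg [hlam hgam hsg heq1 heq2']]]]].
have alpha0 : 0 < alpha.
  apply: lt_le_trans halpha; by apply: ltr_pwDl => //; apply: sumr_ge0 => j _; exact: T0.
have Tal : forall i, T i < alpha by move=> i; exact: lt_le_trans (Tlt i) halpha.
have E1 : forall j, 0 = grad f x ord0 j + alpha * (y ord0 j * sg ord0 j) + (lam *m jac g x) ord0 j.
  move=> j; have := congr1 (fun v : 'rV[R]_n => v ord0 j) heq1.
  by rewrite rc0 !rcD rcZ [X in alpha * X]mxE.
have E2 : forall i, 0 = derive1 (p i) (y ord0 i) + alpha * `|x ord0 i| - (if y ord0 i == 0 then gam i else 0).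
  move=> i; have := congr1 (fun v : 'rV[R]_n => v ord0 i) heq2'.
  by rewrite rc0 rcB rcD rcZ sum_unitv_coord !mxE.
have hA : forall i, xs ord0 i != 0 -> y ord0 i = 0.
  move=> i hi; apply: contrapT => /eqP hy0.
  have ysi : ys ord0 i = 0.
    by have /eqP := hxy i; rewrite mulf_eq0 (negbTE hi) => /eqP.
  have := E2 i; rewrite (negbTE hy0) subr0 => E.
  have := hpd i hi; rewrite ysi -/(pd i) => hp.
  have hxs := hxi i hi.
  have hxn : `|xs ord0 i| <= `|xs ord0 i - x ord0 i| + `|x ord0 i|.
    by rewrite -[X in `|X| <= _](subrK (x ord0 i)) ler_normD.
  have Ti := Tal i; rewrite /T hi in Ti.
  have xs0 : 0 < `|xs ord0 i| by rewrite normr_gt0.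
  move: Ti; rewrite ltr_pdivrMr // => Ti.
  have h1 : alpha * (`|xs ord0 i| / 2) <= alpha * `|x ord0 i|.
    by rewrite ler_pM2l //; lra.
  have h2 : pd i - derive1 (p i) (y ord0 i) <= `|pd i - derive1 (p i) (y ord0 i)| := ler_norm _.
  have h3 : - pd i <= `|pd i| by rewrite -normrN ler_norm.
  nra.
pose la := alpha *: (\row_i (y ord0 i * sg ord0 i) : 'rV[R]_n).
have hla : la + lam *m jac g x = - grad f x.
  apply/eqP; rewrite -subr_eq0 opprK addrC addrA -heq1 //.
have hsupp : forall i, xs ord0 i != 0 -> la ord0 i = 0.
  by move=> i hi; rewrite !mxE hA // mul0r mulr0.
have hgfB : `|grad f x| <= B.
  apply: norm_le_coord; first by rewrite /B addr_ge0.
  move=> j; have := hgf j => hj.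
  have : `|grad f x ord0 j| <= `|grad f xs ord0 j| + `|grad f xs ord0 j - grad f x ord0 j|.
    have := ler_normB (grad f xs ord0 j) (grad f xs ord0 j - grad f x ord0 j).
    by rewrite opprB addrC subrK.
  have := @coord_le_norm R _ (grad f xs) j; rewrite /B => h1 h2.
  by apply: (le_trans h2); rewrite lerD // ltW.
have hQ := HQ x la lam hd hlam hsupp.
rewrite hla normrN in hQ.
have hB : forall i, xs ord0 i == 0 -> x ord0 i * y ord0 i = 0.
  move=> i /eqP hi; apply: contrapT => /eqP; rewrite mulf_eq0 negb_or => /andP [hx0 hy0].
  have ysp := ys_pos i hi.
  have hyi' := hyi i (introT eqP hi).
  have ypos : ys ord0 i / 2 < y ord0 i.
    have : ys ord0 i - y ord0 i <= `|ys ord0 i - y ord0 i| := ler_norm _.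
    move: hyi'; clear -ysp; lra.
  have hsgi : sg ord0 i = Num.sg (x ord0 i) by have [] := hsg i; move=> H _; exact: H.
  have hlai : `|la ord0 i| = alpha * y ord0 i.
    rewrite !mxE hsgi normrM normrM normr_sg hx0 mulr1 !gtr0_norm //.
    move: ypos; clear -ysp; lra.
  have hcl : c * `|la ord0 i| <= B.
    apply: (le_trans _ hgfB); apply: (le_trans _ hQ); apply: (@le_trans _ _ (c * `|la|)).
      by rewrite ler_pM2l // coord_le_norm.
    by rewrite ler_pM2l // lerDl.
  have Ti := Tal i; rewrite /T hi eqxx /= in Ti.
  move: Ti; rewrite ltr_pdivrMr ?mulr_gt0 // => Ti.
  rewrite hlai in hcl.
  have ca : 0 < c * alpha by rewrite mulr_gt0.
  have hh : c * alpha * (ys ord0 i / 2) < c * alpha * y ord0 i by rewrite ltr_pM2l.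
  move: hh Ti hcl; clear -c0 alpha0 ysp; move: (B) => BB; lra.
have hxy0 : forall i, x ord0 i * y ord0 i = 0.
  move=> i; case: (eqVneq (xs ord0 i) 0) => hi.
    by apply: hB; apply/eqP.
  by rewrite hA // mulr0.
split => //.
exists lam, (fun i => alpha * sg ord0 i), (fun i => alpha * Num.sg (x ord0 i)), gam.
split => //.
- apply/rowP => j; rewrite rc0 !rcD sum_unitv_coord.
  have := E1 j; case: (eqVneq (x ord0 j) 0) => hxj.
    by move=> E; apply: etrans E _; ring.
  have hyj : y ord0 j = 0.
    by have /eqP := hxy0 j; rewrite mulf_eq0 (negbTE hxj) => /eqP.
  by rewrite addr0 hyj mul0r mulr0 addr0.
- apply/rowP => i; rewrite rc0 rcD sum_unitv_coord /grad_p mxE.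
  have := E2 i; case: (eqVneq (y ord0 i) 0) => hyz.
    by move=> E; apply: etrans E _; rewrite normrEsg; ring.
  have hxi0 : x ord0 i = 0.
    by have /eqP := hxy0 i; rewrite mulf_eq0 (negbTE hyz) orbF => /eqP.
  by rewrite hxi0 normr0 mulr0 subr0.
Unshelve. all: by end_near. Qed.
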